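(* Let $\alpha,\beta\in\mathbb{R}$ satisfy $\alpha^2>4$ and $\beta>0$, and let $q_{\alpha,\beta}(w)=w^4+\alpha w^3+(\beta-4)w^2-\alpha w+3$ for $w\in\mathbb{C}$. Then $q_{\alpha,\beta}$ has exactly $2$ roots in the open unit disk $U_1(0)=\{w\in\mathbb{C}:|w|<1\}$, counted with multiplicity. *)

(* Defs.v *)
From HB Require Import structures.
From mathcomp Require Import all_boot all_order all_algebra.
From mathcomp Require Import complex.
From mathcomp Require Import reals.
Set Implicit Arguments. Unset Strict Implicit. Unset Printing Implicit Defensive.
Import Order.TTheory GRing.Theory Num.Theory.
Local Open Scope ring_scope.

Definition q_ab (R : realType) (alpha beta : R) : {poly R[i]} :=
  'X^4 + (alpha%:C)%C *: 'X^3 + ((beta - 4)%:C)%C *: 'X^2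
  - (alpha%:C)%C *: 'X + 3%:P.

Definition roots_in_unit_disk_count (R : realType) (p : {poly R[i]}) (n : nat) : Prop :=
  p != 0 /\ exists s : seq R[i],
    p = lead_coef p *: \prod_(z <- s) ('X - z%:P) /\ count (fun z => `|z| < 1) s = n.

(* Main.v *)
Require Import Defs.
From mathcomp Require Import all_boot all_order all_algebra.
From mathcomp Require Import complex reals.
From mathcomp Require Import ring lra.
Import Order.TTheory GRing.Theory Num.Theory.
Local Open Scope ring_scope.

Section S.
Variable R : rcfType.

Lemma normc_lt1 (x y : R) : (`|(x +i* y)%C| < 1 :> R[i]) = (x^+2 + y^+2 < 1).
Proof.
rewrite normc_def /= -[1 : R[i]]/((1:R)%:C)%C ltcR.
by rewrite -[X in _ < X]sqrtr1 ltr_sqrt ?ltr01.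
Qed.

Lemma quad_roots (a b : R) : exists z1 z2 : R[i],
  z1 + z2 = ((-a)%:C)%C /\ z1 * z2 = (b%:C)%C /\
  ((0 <= a^+2 - 4*b /\ exists s, 0 <= s /\ s^+2 = a^+2 - 4*b /\
      z1 = ((-a + s)/2 +i* 0)%C /\ z2 = ((-a - s)/2 +i* 0)%C)
   \/ (a^+2 - 4*b < 0 /\ exists t : R, z1 = ((-a/2) +i* t)%C /\ z2 = ((-a/2) +i* (-t))%C
        /\ (-a/2)^+2 + t^+2 = b)).
Proof.
have [hD|hD] : 0 <= a^+2 - 4*b \/ a^+2 - 4*b < 0 by case: leP; auto.
  set s := Num.sqrt (a^+2 - 4*b).
  have hs : s^+2 = a^+2 - 4*b by rewrite sqr_sqrtr.
  have hs0 : 0 <= s by rewrite sqrtr_ge0.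
  exists ((-a + s)/2 +i* 0)%C, ((-a - s)/2 +i* 0)%C.
  split; first by apply/eqP; rewrite eq_complex /=; apply/andP; split; apply/eqP; field.
  split; last by left; split => //; exists s.
  apply/eqP; rewrite eq_complex /=; apply/andP; split; apply/eqP; last by ring.
  rewrite mulr0 subr0; nra.
set t := Num.sqrt (-(a^+2 - 4*b)) / 2.
have ht : t^+2 = (4*b - a^+2)/4.
  rewrite /t expr_div_n sqr_sqrtr; last lra.
  by field.
exists (Complex (-a/2) t), (Complex (-a/2) (-t)).
split; first by apply/eqP; rewrite eq_complex /=; apply/andP; split; apply/eqP; field.
split; last first.
  right; split => //; exists t; split => //; split => //.
  by rewrite ht; field.
apply/eqP; rewrite eq_complex /=; apply/andP; split; apply/eqP; last by ring.
nra.
Qed.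

Lemma quad_in (a b : R) : 0 < b -> b < 1 -> a^+2 < (1+b)^+2 -> exists z1 z2 : R[i],
  z1 + z2 = ((-a)%:C)%C /\ z1 * z2 = (b%:C)%C /\ `|z1| < 1 /\ `|z2| < 1.
Proof.
move=> hb0 hb1 ha.
have ha1 : a < 1 + b by nra.
have ha2 : -(1+b) < a by nra.
have [z1 [z2 [h1 [h2 [[hD [s [hs0 [hs [hz1 hz2]]]]] | [hD [t [hz1 [hz2 ht]]]]]]]]] := quad_roots a b;
  exists z1, z2; do 2 (split => //); rewrite hz1 hz2 !normc_lt1.
- have s1 : s < 2 + a by nra.
  have s2 : s < 2 - a by nra.
  split; nra.
- by split; rewrite ?sqrrN ht.
Qed.

Lemma quad_out (c d : R) : 1 < d -> c^+2 < (1+d)^+2 -> exists z1 z2 : R[i],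
  z1 + z2 = ((-c)%:C)%C /\ z1 * z2 = (d%:C)%C /\ ~~ (`|z1| < 1) /\ ~~ (`|z2| < 1).
Proof.
move=> hd hc.
have hc1 : c < 1 + d by nra.
have hc2 : -(1+d) < c by nra.
have [z1 [z2 [h1 [h2 [[hD [s [hs0 [hs [hz1 hz2]]]]] | [hD [t [hz1 [hz2 ht]]]]]]]]] := quad_roots c d;
  exists z1, z2; do 2 (split => //); rewrite hz1 hz2 !normc_lt1 -!leNgt.
- have [cp|cn] : 0 <= c \/ c < 0 by case: leP; auto.
    have c2 : 2 < c by nra.
    have s1' : s^+2 <= (c - 2)^+2 by nra.
    have s1 : s <= c - 2 by nra.
    split; nra.
  have c2 : c < -2 by nra.
  have s1' : s^+2 <= (- c - 2)^+2 by nra.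
  have s1 : s <= - c - 2 by nra.
  split; nra.
- by split; rewrite ?sqrrN ht; apply: ltW.
Qed.
End S.

Lemma quad_fact (T : comRingType) (X Z1 Z2 A B : T) :
  Z1 + Z2 = -A -> Z1 * Z2 = B -> (X - Z1) * (X - Z2) = X^+2 + A * X + B.
Proof.
move=> h1 h2; transitivity (X^+2 - (Z1 + Z2) * X + Z1 * Z2); first by ring.
by rewrite h1 h2; ring.
Qed.

Lemma quartic_id (R' T : comRingType) (f : {rmorphism R' -> T}) (X : T) (al be a b c d : R') :
  al = a + c -> be - 4 = b + d + a * c -> - al = a * d + b * c -> 3 = b * d ->
  X^+4 + f al * X^+3 + f (be - 4) * X^+2 - f al * X + 3
  = (X^+2 + f a * X + f b) * (X^+2 + f c * X + f d).
Proof.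
move=> h1 h2 h3 h4.
have e1 : f al - (f a + f c) = 0 by rewrite h1 rmorphD subrr.
have e2 : f (be - 4) - (f b + f d + f a * f c) = 0 by rewrite h2 !rmorphD rmorphM subrr.
have e3 : - f al - (f a * f d + f b * f c) = 0 by rewrite -rmorphN h3 rmorphD !rmorphM subrr.
have e4 : 3 - f b * f d = 0 by rewrite -rmorphM -h4 rmorph_nat subrr.
transitivity ((X^+2 + f a * X + f b) * (X^+2 + f c * X + f d)
  + (f al - (f a + f c)) * X^+3 + (f (be - 4) - (f b + f d + f a * f c)) * X^+2
  + (- f al - (f a * f d + f b * f c)) * X + (3 - f b * f d)); first by ring.
by rewrite e1 e2 e3 e4; ring.
Qed.

Theorem mainTheorem1 (R : realType) (alpha beta : R) :
  alpha ^+ 2 > 4 -> beta > 0 -> roots_in_unit_disk_count (q_ab alpha beta) 2.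
Proof.
move=> ha hb.
pose G : {poly R} := ('X * 'X + (4:R)%:P * 'X + (3:R)%:P - beta%:P * 'X) * ((3:R)%:P - 'X * 'X) * ((3:R)%:P - 'X * 'X)
   - (alpha^+2)%:P * ('X * 'X) * ((1:R)%:P + 'X) * ((3:R)%:P + 'X).
have [b /andP[b0 b1] rb] : exists2 b, 0 <= b <= 1 & root (- G) b.
  apply: poly_ivt; first exact: ler01.
  rewrite /G !(hornerD, hornerN, hornerM, hornerC, hornerX); apply/andP; split; nra.
have hG : (b^+2 + 4*b + 3 - beta*b) * (3 - b^+2)^+2 - alpha^+2 * b^+2 * (1 + b) * (3 + b) = 0.
  by move: rb; rewrite /root /G !(hornerD, hornerN, hornerM, hornerC, hornerX) => /eqP; lra.
have bn0 : b != 0.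
  apply/eqP => b0'; move: hG; rewrite b0'; lra.
have bp : 0 < b by rewrite lt_neqAle eq_sym bn0.
have bl1 : b < 1.
  rewrite lt_neqAle b1 andbT; apply/eqP => b1'; move: hG; rewrite b1'; nra.
have e3 : 0 < 3 - b^+2 by nra.
have e3n : 3 - b^+2 != 0 by rewrite gt_eqF.
have key : alpha^+2 * b^+2 < (3 - b^+2)^+2.
  have P : 0 < (1 + b) * (3 + b) by nra.
  have Q : 0 < beta * b * (3 - b^+2)^+2 by rewrite !mulr_gt0 // exprn_gt0.
  nra.
pose k := alpha * b / (3 - b^+2).
have hk : k^+2 < 1.
  rewrite /k expr_div_n ltr_pdivrMr ?exprn_gt0 // mul1r exprMn; done.
pose a := - k * (1 + b).
pose c := k * (1 + 3 / b).
pose d := 3 / b.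
have ha2 : a^+2 < (1 + b)^+2 by rewrite /a exprMn sqrrN; nra.
have hd : 1 < d by rewrite /d ltr_pdivlMr // mul1r; lra.
have hc2 : c^+2 < (1 + d)^+2.
  have D : 0 < 1 + d by lra.
  rewrite /c -/d exprMn; nra.
have [z1 [z2 [h1 [h2 [hz1 hz2]]]]] := @quad_in _ a b bp bl1 ha2.
have [z3 [z4 [h3 [h4 [hz3 hz4]]]]] := @quad_out _ c d hd hc2.
have r1 : alpha = a + c by rewrite /a /c /k; field; rewrite ?bn0 ?e3n.
have r3 : - alpha = a * d + b * c by rewrite /a /c /d /k; field; rewrite ?bn0 ?e3n.
have r4 : 3 = b * d by rewrite /d mulrC divfK.
have r2 : beta - 4 = b + d + a * c.
  apply/esym/eqP; rewrite -subr_eq0.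
  have -> : b + d + a * c - (beta - 4) =
    ((b^+2 + 4*b + 3 - beta*b) * (3 - b^+2)^+2 - alpha^+2 * b^+2 * (1 + b) * (3 + b))
     / (b * (3 - b^+2)^+2) by rewrite /a /c /d /k; field; rewrite ?bn0 ?e3n.
  by rewrite hG mul0r.
have p1 : z1%:P + z2%:P = - ((a%:C)%C)%:P by rewrite -polyCD h1 rmorphN polyCN.
have p2 : z1%:P * z2%:P = ((b%:C)%C)%:P by rewrite -polyCM h2.
have p3 : z3%:P + z4%:P = - ((c%:C)%C)%:P by rewrite -polyCD h3 rmorphN polyCN.
have p4 : z3%:P * z4%:P = ((d%:C)%C)%:P by rewrite -polyCM h4.
have hq : q_ab alpha beta = \prod_(z <- [:: z1; z2; z3; z4]) ('X - z%:P).
  rewrite !big_cons big_nil mulr1 mulrA (@quad_fact _ (polyX _) _ _ _ _ p1 p2) (@quad_fact _ (polyX _) _ _ _ _ p3 p4).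
  rewrite /q_ab -!mul_polyC.
  have -> : (3 : R[i])%:P = 3 by rewrite rmorph_nat.
  exact: (@quartic_id _ _ (polyC \o real_complex R) (polyX _) _ _ _ _ _ _ r1 r2 r3 r4).
have mon : \prod_(z <- [:: z1; z2; z3; z4]) ('X - z%:P) \is monic by apply: monic_prod_XsubC.
split; first by rewrite hq monic_neq0.
exists [:: z1; z2; z3; z4]; split; first by rewrite hq (monicP mon) scale1r.
by rewrite /= hz1 hz2 (negbTE hz3) (negbTE hz4).
Qed.
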